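(* Under the standing assumptions below, let $\gamma>0$ and let $\{(y^t,z^t,x^t)\}$ be generated by the PR splitting iteration. Then there exists $\kappa>0$ (depending only on $\gamma$ and $L$) such that for all $t\ge1$, \[ \operatorname{dist}\big(0,\partial\mathcal{P}_\gamma(y^t,z^t,x^t)\big)\le\kappa\|y^{t+1}-y^t\| . \]
   Context: Standing assumptions: $f:\mathbb{R}^n\to\mathbb{R}$ is differentiable and strongly convex with modulus at least $\sigma>0$, and $\nabla f$ is Lipschitz continuous with modulus at most $L>0$. The function $g:\mathbb{R}^n\to(-\infty,\infty]$ is proper and lower semicontinuous, and for the $\gamma>0$ used, $\operatorname{Argmin}_u\{\gamma g(u)+\frac12\|u-w\|^2\}$ is nonempty for every $w\in\mathbb{R}^n$. PR splitting iteration: given $x^0$ and $\gamma>0$, for $t=0,1,2,\dots$: $y^{t+1}=\operatorname{argmin}_y\{f(y)+\frac{1}{2\gamma}\|y-x^t\|^2\}$; $z^{t+1}\in\operatorname{Argmin}_z\{g(z)+\frac{1}{2\gamma}\|2y^{t+1}-x^t-z\|^2\}$; $x^{t+1}=x^t+2(z^{t+1}-y^{t+1})$. Merit function: $\mathcal{P}_\gamma(y,z,x):=f(y)+g(z)-\frac{3}{2\gamma}\|y-z\|^2+\frac{1}{\gamma}\langle x-y,z-y\rangle$, regarded as a function on $\mathbb{R}^n\times\mathbb{R}^n\times\mathbb{R}^n$; $\partial\mathcal{P}_\gamma$ is its limiting subdifferential: $v\in\partial h(x)$ iff there exist $x^t\to x$ with $h(x^t)\to h(x)$ and $v^t\to v$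 such that $\liminf_{z\to x^t, z\ne x^t}\frac{h(z)-h(x^t)-\langle v^t,z-x^t\rangle}{\|z-x^t\|}\ge0$ for each $t$. *)

(* Defs.v *)
From Stdlib Require Import Reals Lra.
From mathcomp Require Import all_boot.
Set Implicit Arguments. Unset Strict Implicit. Unset Printing Implicit Defensive.
Open Scope R_scope.

Definition vec (n : nat) := 'I_n -> R.
Definition vadd n (x y : vec n) : vec n := fun i => x i + y i.
Definition vsub n (x y : vec n) : vec n := fun i => x i - y i.
Definition vscal n (a : R) (x : vec n) : vec n := fun i => a * x i.
Definition vzero n : vec n := fun _ => 0.
Definition inner n (x y : vec n) : R := \big[Rplus/0]_(i < n) (x i * y i).
Definition norm n (x : vec n) : R := sqrt (inner x x).

Inductive ER := Fin (r : R) | PInf.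
Definition ER_le (a b : ER) : Prop :=
  match a, b with
  | _, PInf => True
  | PInf, Fin _ => False
  | Fin x, Fin y => x <= y
  end.
Definition ER_gt (e : ER) (r : R) : Prop :=
  match e with Fin a => r < a | PInf => True end.
Definition ER_addR (e : ER) (r : R) : ER :=
  match e with Fin a => Fin (a + r) | PInf => PInf end.
Definition ER_scal (c : R) (e : ER) : ER :=
  match e with Fin a => Fin (c * a) | PInf => PInf end.

Definition has_gradient n (f : vec n -> R) (gf : vec n -> vec n) : Prop :=
  forall x eps, 0 < eps -> exists delta, 0 < delta /\
    forall z, norm (vsub z x) < delta ->
      Rabs (f z - f x - inner (gf x) (vsub z x)) <= eps * norm (vsub z x).

Definition strongly_convex n (f : vec n -> R) (sigma : R) : Prop :=
  forall x y lam, 0 <= lam <= 1 ->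
    f (vadd (vscal lam x) (vscal (1 - lam) y))
      <= lam * f x + (1 - lam) * f y
         - sigma / 2 * lam * (1 - lam) * (norm (vsub x y)) ^ 2.

Definition lipschitz n (F : vec n -> vec n) (L : R) : Prop :=
  forall x y, norm (vsub (F x) (F y)) <= L * norm (vsub x y).

Definition proper_ER n (g : vec n -> ER) : Prop := exists x r, g x = Fin r.
Definition lsc n (g : vec n -> ER) : Prop :=
  forall x r, ER_gt (g x) r -> exists delta, 0 < delta /\
    forall z, norm (vsub z x) < delta -> ER_gt (g z) r.

Definition is_argmin n (h : vec n -> ER) (u : vec n) : Prop :=
  forall u', ER_le (h u) (h u').
Definition is_argminR n (h : vec n -> R) (u : vec n) : Prop :=
  forall u', h u <= h u'.

Definition prox_obj n (g : vec n -> ER) (gamma : R) (w : vec n) (u : vec n) : ER :=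
  ER_addR (ER_scal gamma (g u)) (/ 2 * (norm (vsub u w)) ^ 2).

Definition PR_iter n (f : vec n -> R) (g : vec n -> ER) (gamma : R)
    (y z x : nat -> vec n) : Prop :=
  forall t,
    is_argminR (fun v => f v + / (2 * gamma) * (norm (vsub v (x t))) ^ 2) (y t.+1)
    /\ is_argmin (fun w => ER_addR (g w)
           (/ (2 * gamma) * (norm (vsub (vsub (vscal 2 (y t.+1)) (x t)) w)) ^ 2))
         (z t.+1)
    /\ x t.+1 = vadd (x t) (vscal 2 (vsub (z t.+1) (y t.+1))).

Definition trip n := (vec n * vec n * vec n)%type.
Definition tsub n (a b : trip n) : trip n :=
  (vsub a.1.1 b.1.1, vsub a.1.2 b.1.2, vsub a.2 b.2).
Definition tinner n (a b : trip n) : R :=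
  inner a.1.1 b.1.1 + inner a.1.2 b.1.2 + inner a.2 b.2.
Definition tnorm n (a : trip n) : R := sqrt (tinner a a).

Definition tconv n (s : nat -> trip n) (a : trip n) : Prop :=
  forall eps, 0 < eps -> exists N, forall k, (N <= k)%nat -> tnorm (tsub (s k) a) < eps.
Definition Rconv (s : nat -> R) (a : R) : Prop :=
  forall eps, 0 < eps -> exists N, forall k, (N <= k)%nat -> Rabs (s k - a) < eps.

(** Frechet (regular) subgradient at a point of the domain:
    liminf_{w -> p, w <> p} (h w - h p - <v, w - p>) / ||w - p|| >= 0 *)
Definition frechet_subgrad n (h : trip n -> ER) (p v : trip n) : Prop :=
  exists hp, h p = Fin hp /\
  forall eps, 0 < eps -> exists delta, 0 < delta /\
    forall w, 0 < tnorm (tsub w p) < delta ->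
      ER_le (Fin (hp + tinner v (tsub w p) - eps * tnorm (tsub w p))) (h w).

Definition limiting_subgrad n (h : trip n -> ER) (p v : trip n) : Prop :=
  exists (ps vs : nat -> trip n) (hps : nat -> R) (hp : R),
    h p = Fin hp /\
    tconv ps p /\ (forall k, h (ps k) = Fin (hps k)) /\ Rconv hps hp /\
    tconv vs v /\ (forall k, frechet_subgrad h (ps k) (vs k)).

(** dist(0, S) <= c, with inf over the empty set = +oo *)
Definition dist0_le n (S : trip n -> Prop) (c : R) : Prop :=
  forall eps, 0 < eps -> exists v, S v /\ tnorm v <= c + eps.

Definition Pgamma n (f : vec n -> R) (g : vec n -> ER) (gamma : R) (p : trip n) : ER :=
  let y := p.1.1 in let z := p.1.2 in let x := p.2 in
  ER_addR (g z)
    (f y - 3 / (2 * gamma) * (norm (vsub y z)) ^ 2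
         + / gamma * inner (vsub x y) (vsub z y)).

(* Main.v *)
Require Import Defs.
From HB Require Import structures.
From Stdlib Require Import Reals Lra Psatz FunctionalExtensionality.
From mathcomp Require Import ssreflect ssrfun ssrbool.
From mathcomp Require all_boot.
Open Scope R_scope.
Module Aux.
Import all_boot.
Set Implicit Arguments. Unset Strict Implicit.

HB.instance Definition _ := Monoid.isComLaw.Build R 0 Rplus
  (fun a b c => esym (Rplus_assoc a b c)) Rplus_comm Rplus_0_l.

Lemma sumD n (F G : 'I_n -> R) :
  \big[Rplus/0]_(i < n) (F i + G i) = \big[Rplus/0]_(i < n) F i + \big[Rplus/0]_(i < n) G i.
Proof. by rewrite big_split. Qed.

Lemma sumZ n c (F : 'I_n -> R) :
  \big[Rplus/0]_(i < n) (c * F i) = c * \big[Rplus/0]_(i < n) F i.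
Proof.
elim/big_rec2: _ => [|i a b _ ->]; [ring | ring].
Qed.

Lemma sum_ge0 n (F : 'I_n -> R) : (forall i, 0 <= F i) -> 0 <= \big[Rplus/0]_(i < n) F i.
Proof. move=> H; elim/big_ind: _ => //; [lra| move=> a b; lra]. Qed.

Lemma inner_sym n (a b : vec n) : inner a b = inner b a.
Proof. rewrite /inner; apply: eq_bigr => i _; ring. Qed.
Lemma inner_addl n (a b c : vec n) : inner (vadd a b) c = inner a c + inner b c.
Proof. rewrite /inner -sumD; apply: eq_bigr => i _; rewrite /vadd; ring. Qed.
Lemma inner_scall n c (a b : vec n) : inner (vscal c a) b = c * inner a b.
Proof. rewrite /inner -sumZ; apply: eq_bigr => i _; rewrite /vscal; ring. Qed.
Lemma inner_subl n (a b c : vec n) : inner (vsub a b) c = inner a c - inner b c.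
Proof. have -> : vsub a b = vadd a (vscal (-1) b).
  by apply: functional_extensionality => i; rewrite /vsub /vadd /vscal; ring.
rewrite inner_addl inner_scall; ring. Qed.
Lemma inner_addr n (a b c : vec n) : inner c (vadd a b) = inner c a + inner c b.
Proof. by rewrite inner_sym inner_addl !(@inner_sym _ c). Qed.
Lemma inner_subr n (a b c : vec n) : inner c (vsub a b) = inner c a - inner c b.
Proof. by rewrite inner_sym inner_subl !(@inner_sym _ c). Qed.
Lemma inner_scalr n c (a b : vec n) : inner b (vscal c a) = c * inner b a.
Proof. by rewrite inner_sym inner_scall !(@inner_sym _ b). Qed.
Lemma inner_ge0 n (a : vec n) : 0 <= inner a a.
Proof. apply: sum_ge0 => i; nra. Qed.
Lemma norm_ge0 n (a : vec n) : 0 <= norm a.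
Proof. apply: sqrt_pos. Qed.
Lemma norm_sq n (a : vec n) : norm a ^ 2 = inner a a.
Proof. rewrite /norm /= Rmult_1_r sqrt_sqrt //; apply: inner_ge0. Qed.

Lemma sumsq0 n (F : 'I_n -> R) i : \big[Rplus/0]_(j < n) (F j * F j) = 0 -> F i = 0.
Proof.
rewrite (bigD1 i) //= => H.
have : 0 <= \big[Rplus/0]_(j < n | j != i) (F j * F j).
  apply: (big_ind (fun x => 0 <= x)); [lra| move=> a b; lra| move=> j _; nra].
move=> H2. set S := \big[Rplus/0]_(j < n | j != i) (F j * F j) in H H2.
have : F i * F i = 0 by have := Rle_0_sqr (F i); rewrite /Rsqr; move: H; set q := F i * F i; lra.
by move/Rmult_integral => [].
Qed.

Lemma inner0_eq n (a : vec n) : inner a a = 0 -> a = @vzero n.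
Proof. move=> H; apply: functional_extensionality => i; exact: (@sumsq0 n a i H). Qed.

Lemma norm_scal n c (a : vec n) : norm (vscal c a) = Rabs c * norm a.
Proof.
rewrite /norm inner_scall inner_scalr -Rmult_assoc sqrt_mult_alt.
  by rewrite -sqrt_Rsqr_abs.
apply: Rle_0_sqr.
Qed.

Lemma fo n (f : vec n -> R) gf gamma (x y : vec n) :
  has_gradient f gf -> 0 < gamma ->
  is_argminR (fun v => f v + / (2 * gamma) * (norm (vsub v x)) ^ 2) y ->
  gf y = vscal (/gamma) (vsub x y).
Proof.
move=> Hg Hgam Hmin.
set e := vsub (gf y) (vscal (/gamma) (vsub x y)).
have Hgf : gf y = vadd e (vscal (/gamma) (vsub x y)).
  by apply: functional_extensionality => i; rewrite /e /vadd /vsub /vscal; ring.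
suff He : inner e e = 0.
  have He0 := fun i => f_equal (fun h => h i) (inner0_eq He).
  apply: functional_extensionality => i; have := He0 i.
  by rewrite /e /vsub /vzero => ?; lra.
clearbody e.
case: (Rle_lt_or_eq_dec _ _ (inner_ge0 e)) => Hpos; last by rewrite Hpos.
exfalso.
set N := norm e.
have HN : 0 < N by apply: sqrt_lt_R0.
have HNN : inner e e = N * N by rewrite -(norm_sq e) /N; ring.
have [delta [Hd Hdel]] := Hg y (N / 4) ltac:(lra).
set s := Rmin (gamma / 2) (delta / (2 * N)).
have Hs0 : 0 < s.
  apply: Rmin_pos; [lra| apply: Rdiv_lt_0_compat; lra].
have Hs1 : s <= gamma / 2 by apply: Rmin_l.
have Hs2 : s * N <= delta / 2.
  have : s <= delta / (2 * N) by apply: Rmin_r.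
  move=> H; have := Rmult_le_compat_r N _ _ (Rlt_le _ _ HN) H.
  by have -> : delta / (2 * N) * N = delta / 2 by field; lra.
set v := vsub y (vscal s e).
have Hv1 : vsub v y = vscal (- s) e.
  by apply: functional_extensionality => i; rewrite /v /vsub /vscal; ring.
have Hnv : norm (vsub v y) = s * N.
  by rewrite Hv1 norm_scal Rabs_Ropp Rabs_pos_eq //; lra.
have Hgr := Hdel v ltac:(rewrite Hnv; lra).
rewrite Hnv Hv1 inner_scalr Hgf inner_addl inner_scall inner_subl in Hgr.
have Hm := Hmin v.
rewrite !norm_sq in Hm.
have Hv2 : vsub v x = vsub (vsub y x) (vscal s e).
  by apply: functional_extensionality => i; rewrite /v /vsub /vscal; ring.
rewrite Hv2 !inner_subl !inner_subr !inner_scall !inner_scalr ?inner_subl ?inner_subr in Hm.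
have S1 := @inner_sym _ x y. have S2 := @inner_sym _ x e. have S3 := @inner_sym _ y e.
move: Hgr Hm; rewrite HNN.
set Ixe := inner x e; set Iye := inner y e; set Iex := inner e x; set Iey := inner e y.
move=> Hgr Hm.
have := Rle_abs (f v - f y - - s * (N * N + / gamma * (Ixe - Iye))).
have Hig : /gamma * s <= / 2.
  have := Rinv_0_lt_compat _ Hgam => Hi.
  have : /gamma * s <= /gamma * (gamma / 2) by apply: Rmult_le_compat_l; lra.
  by have -> : /gamma * (gamma / 2) = / 2 by field; lra.
have Hi0 : 0 < / gamma by apply: Rinv_0_lt_compat.
have Hk : / (2 * gamma) * s <= / 4.
  rewrite Rinv_mult; have : / 2 * (/ gamma * s) <= / 2 * / 2 by apply: Rmult_le_compat_l; lra.
  by rewrite Rmult_assoc; have -> : / 2 * / 2 = / 4 by field.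
have HsNN : 0 < s * (N * N) by apply: Rmult_lt_0_compat => //; nra.
have P := Rmult_le_compat_l _ _ _ (Rlt_le _ _ HsNN) Hk.
have Hk2 : / gamma = 2 * / (2 * gamma) by field; lra.
move=> Habs; rewrite Hk2 in Habs Hgr.
rewrite /Iex /Iey -S2 -S3 -/Ixe -/Iye in Hm.
clear -P Hgr Hm Habs HsNN. clearbody Ixe Iye s N v.
nra.
Qed.

Ltac expand := repeat (first [rewrite inner_subl | rewrite inner_subr | rewrite inner_addl
  | rewrite inner_addr | rewrite inner_scall | rewrite inner_scalr]).

Lemma vsub_addK n (a b : vec n) : vsub (vadd a b) a = b.
Proof. by apply: functional_extensionality => i; rewrite /vsub /vadd; ring. Qed.

Lemma inner_sq_add n (a b : vec n) :
  inner (vadd a b) (vadd a b) <= 2 * inner a a + 2 * inner b b.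
Proof.
have := inner_ge0 (vsub a b); expand; have := @inner_sym _ a b; lra.
Qed.

Lemma tnorm_zero n (a : trip n) : tnorm (tsub a a) = 0.
Proof.
have H : forall v : vec n, inner (vsub v v) (vsub v v) = 0.
  by move=> v; expand; have := @inner_sym _ v v; lra.
by rewrite /tnorm /tinner /tsub /= !H !Rplus_0_r sqrt_0.
Qed.

End Aux.
Import Aux.

Theorem mainTheorem5 :
  forall (gamma L : R), 0 < gamma -> 0 < L ->
  exists kappa : R, 0 < kappa /\
  forall (n : nat) (f : vec n -> R) (gf : vec n -> vec n) (sigma : R)
         (g : vec n -> ER),
    has_gradient f gf ->
    0 < sigma -> strongly_convex f sigma ->
    lipschitz gf L ->
    proper_ER g -> lsc g ->
    (forall w : vec n, exists u, is_argmin (prox_obj g gamma w) u) ->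
  forall (y z x : nat -> vec n),
    PR_iter f g gamma y z x ->
  forall t : nat, (1 <= t)%nat ->
    dist0_le (limiting_subgrad (Pgamma f g gamma) (y t, z t, x t))
             (kappa * norm (vsub (y (S t)) (y t))).
Proof.
move=> gamma L Hgam HL.
exists (2 * (gamma * L + 1) / gamma); split.
  apply: Rdiv_lt_0_compat => //; nra.
move=> n f gf sigma g Hgrad _ _ Hlip [u0 [r0 Hu0]] _ _ y z x Hit [|m] Ht eps Heps; first by inversion Ht.
have [HyY [HzZ HX]] := Hit m.
have [HyY' _] := Hit (S m).
have G1 := fo Hgrad Hgam HyY.
have G2 := fo Hgrad Hgam HyY'.
set Y := y (S m) in HyY HzZ HX G1 G2 HyY' *; set Z := z (S m) in HzZ HX *.
set X := x (S m) in HX HyY' G2 *; set Xp := x m in HyY HzZ HX G1 *; set Y' := y (S (S m)) in HyY' G2 *.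
set D := vsub Y' Y.
have Hkey : vscal 2 (vsub Z Y) = vadd (vscal gamma (vsub (gf Y') (gf Y))) D.
  rewrite G1 G2 HX; apply: functional_extensionality => i.
  rewrite /D /vscal /vadd /vsub; field; lra.
set W := inner (vsub Y Z) (vsub Y Z).
have HW : 4 * W <= 2 * (gamma * gamma) * (L * L) * (norm D * norm D) + 2 * (norm D * norm D).
  have E1 : inner (vscal 2 (vsub Z Y)) (vscal 2 (vsub Z Y)) = 4 * W.
    rewrite /W; expand; have := @inner_sym _ Y Z; lra.
  have := inner_sq_add (vscal gamma (vsub (gf Y') (gf Y))) D.
  rewrite -Hkey E1 inner_scall inner_scalr -!norm_sq -/D.
  have := Hlip Y' Y; rewrite -/D => Hl.
  have Hn0 := norm_ge0 (vsub (gf Y') (gf Y)).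
  have Hl2 : norm (vsub (gf Y') (gf Y)) ^ 2 <= (L * L) * (norm D * norm D).
    have := Rmult_le_compat _ _ _ _ Hn0 Hn0 Hl Hl. move=> H; simpl; nra.
  have Hg2 : 0 <= gamma * gamma by nra.
  have := Rmult_le_compat_l _ _ _ Hg2 Hl2.
  simpl; nra.
set v := (@vzero n, vscal (2 / gamma) (vsub Y Z), vscal (/ gamma) (vsub Z Y)).
have Hv : tnorm v <= 2 * (gamma * L + 1) / gamma * norm D.
  have E : tinner v v = 5 * (/ gamma * / gamma) * W.
    rewrite /tinner /v /=; have -> : @vzero n = vscal 0 (@vzero n).
      by apply: functional_extensionality => i; rewrite /vscal /vzero; ring.
    rewrite /W; expand. have := @inner_sym _ Y Z. rewrite /Rdiv. move=> ?; nra.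
  rewrite /tnorm E.
  have Hk0 : 0 <= 2 * (gamma * L + 1) / gamma * norm D.
    apply: Rmult_le_pos; [apply: Rlt_le; apply: Rdiv_lt_0_compat; nra| apply: norm_ge0].
  rewrite -(sqrt_Rsqr _ Hk0); apply: sqrt_le_1_alt.
  rewrite /Rsqr /Rdiv.
  have Hi : 0 < / gamma by apply: Rinv_0_lt_compat.
  have Hgi : gamma * / gamma = 1 by field; lra.
  have HW0 : 0 <= W by apply: inner_ge0.
  set ig := / gamma in Hi Hgi *.
  set N := norm D in HW *.
  have Hq : 0 <= ig * ig by nra.
  have := Rmult_le_compat_l _ _ _ Hq HW.
  move=> H1.
  have Hgl : 0 < gamma * L by nra.
  have : 5 * (ig * ig) * W <= (ig * ig) * (5/2 * (gamma * gamma * (L * L) + 1) * (N * N)) by nra.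
  move=> H2; apply: (Rle_trans _ _ _ H2).
  have -> : 2 * (gamma * L + 1) * ig * N * (2 * (gamma * L + 1) * ig * N) =
     (ig * ig) * (4 * (gamma * L + 1) * (gamma * L + 1) * (N * N)) by ring.
  apply: Rmult_le_compat_l => //.
  apply: Rmult_le_compat_r; first by nra.
  nra.
exists v; split; last by lra.
have [gz Hgz] : exists gz, g Z = Fin gz.
  have := HzZ u0; rewrite Hu0; case: (g Z) => [r|] //= _; by exists r.
set hp := gz + (f Y - 3 / (2 * gamma) * norm (vsub Y Z) ^ 2 + / gamma * inner (vsub X Y) (vsub Z Y)).
have Hp : Pgamma f g gamma (Y, Z, X) = Fin hp by rewrite /Pgamma /= Hgz.
exists (fun _ => (Y, Z, X)), (fun _ => v), (fun _ => hp), hp.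
split => //; split.
  by move=> e He; exists 0%nat => k _; rewrite tnorm_zero.
split => //; split.
  by move=> e He; exists 0%nat => k _; rewrite Rminus_diag Rabs_R0.
split.
  by move=> e He; exists 0%nat => k _; rewrite tnorm_zero.
move=> _; exists hp; split => // e He.
have [delta1 [Hd1 Hdel1]] := Hgrad Y (e / 2) ltac:(lra).
exists (Rmin delta1 (e * gamma / 10)); split.
  apply: Rmin_pos => //; nra.
case=> [[wy wz] wx].
have [dy ->] : exists dy, wy = vadd Y dy.
  by exists (vsub wy Y); apply: functional_extensionality => i; rewrite /vadd /vsub; ring.
have [dz ->] : exists dz, wz = vadd Z dz.
  by exists (vsub wz Z); apply: functional_extensionality => i; rewrite /vadd /vsub; ring.
have [dx ->] : exists dx, wx = vadd X dx.
  by exists (vsub wx X); apply: functional_extensionality => i; rewrite /vadd /vsub; ring.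
have Ets : tsub (vadd Y dy, vadd Z dz, vadd X dx) (Y, Z, X) = (dy, dz, dx).
  by rewrite /tsub /= !vsub_addK.
rewrite Ets => -[HT0 HTd].
set T := tnorm (dy, dz, dx) in HT0 HTd *.
have HT1 : T < delta1 by apply: (Rlt_le_trans _ _ _ HTd); apply: Rmin_l.
have HT2 : T <= e * gamma / 10 by apply: Rlt_le; apply: (Rlt_le_trans _ _ _ HTd); apply: Rmin_r.
have HTT : T * T = inner dy dy + inner dz dz + inner dx dx.
  by rewrite /T /tnorm sqrt_sqrt //; rewrite /tinner /=; have := inner_ge0 dy;
     have := inner_ge0 dz; have := inner_ge0 dx; lra.
have Hdy : norm dy <= T.
  rewrite /T /tnorm /norm; apply: sqrt_le_1_alt; rewrite /tinner /=.
  have := inner_ge0 dz; have := inner_ge0 dx; lra.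
have Hgr := Hdel1 (vadd Y dy) ltac:(rewrite vsub_addK; lra).
rewrite vsub_addK G1 inner_scall in Hgr.
have Hgr' := Rle_trans _ _ _ (Rle_abs _) Hgr.
rewrite /Pgamma; cbv zeta; cbn [fst snd].
case Hgw : (g (vadd Z dz)) => [gw|]; last by [].
cbn [ER_le ER_addR].
have Hpr := HzZ (vadd Z dz); rewrite Hgz Hgw !norm_sq in Hpr; cbn [ER_le ER_addR] in Hpr.
rewrite /hp !norm_sq /tinner /v; cbn [fst snd].
have Hgl : -(e / 2 * norm dy) <= f (vadd Y dy) - f Y - / gamma * inner (vsub Xp Y) dy.
  move: Hgr; set A := (f _ - _ - _) => Hg'.
  have := Rle_abs (- A); rewrite Rabs_Ropp; lra.
have Hid : -1/2 * (inner (vsub (vsub (vscal 2 Y) Xp) (vadd Z dz)) (vsub (vsub (vscal 2 Y) Xp) (vadd Z dz))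
     - inner (vsub (vsub (vscal 2 Y) Xp) Z) (vsub (vsub (vscal 2 Y) Xp) Z))
   + inner (vsub Xp Y) dy
   - 3/2 * (inner (vsub (vadd Y dy) (vadd Z dz)) (vsub (vadd Y dy) (vadd Z dz)) - inner (vsub Y Z) (vsub Y Z))
   + (inner (vsub (vadd X dx) (vadd Y dy)) (vsub (vadd Z dz) (vadd Y dy)) - inner (vsub X Y) (vsub Z Y))
   - 2 * inner (vsub Y Z) dz - inner (vsub Z Y) dx
   = -1/2 * inner dz dz - 3/2 * inner (vsub dy dz) (vsub dy dz) + inner (vsub dx dy) (vsub dz dy).
  rewrite HX; expand.
  have := @inner_sym _ Y Z; have := @inner_sym _ Y Xp; have := @inner_sym _ Y dy;
  have := @inner_sym _ Y dz; have := @inner_sym _ Y dx; have := @inner_sym _ Z Xp;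
  have := @inner_sym _ Z dy; have := @inner_sym _ Z dz; have := @inner_sym _ Z dx;
  have := @inner_sym _ Xp dy; have := @inner_sym _ Xp dz; have := @inner_sym _ Xp dx;
  have := @inner_sym _ dy dz; have := @inner_sym _ dy dx; have := @inner_sym _ dz dx.
  lra.
have HQ : -5 * (T * T) <= -1/2 * inner dz dz - 3/2 * inner (vsub dy dz) (vsub dy dz) + inner (vsub dx dy) (vsub dz dy).
  rewrite HTT.
  have := inner_ge0 (vadd dy dz); have := inner_ge0 (vadd dx dy);
  have := inner_ge0 (vadd (vsub dx dy) (vsub dz dy)); expand.
  have := @inner_sym _ dy dz; have := @inner_sym _ dy dx; have := @inner_sym _ dz dx.
  have := inner_ge0 dx; have := inner_ge0 dy; have := inner_ge0 dz.
  lra.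
have Hz0 : inner (@vzero n) dy = 0.
  have -> : @vzero n = vscal 0 (@vzero n).
    by apply: functional_extensionality => i; rewrite /vscal /vzero; ring.
  by rewrite inner_scall Rmult_0_l.
rewrite Hz0 !inner_scall.
have Hi : 0 < / gamma by apply: Rinv_0_lt_compat.
have E1 : 3 / (2 * gamma) = 3 / 2 * / gamma by field; lra.
have E2 : 2 / gamma = 2 * / gamma by field; lra.
have E3 : / (2 * gamma) = / 2 * / gamma by field; lra.
rewrite E1 E2; rewrite E3 in Hpr.
have HidM := f_equal (fun r => / gamma * r) Hid; cbv beta in HidM.
have HQM := Rmult_le_compat_l _ _ _ (Rlt_le _ _ Hi) HQ.
have HTe : / gamma * (5 * (T * T)) <= e / 2 * T.
  have : / gamma * 5 * T <= e / 2.
    have : / gamma * 5 * T <= / gamma * 5 * (e * gamma / 10) by apply: Rmult_le_compat_l; lra.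
    by have -> : / gamma * 5 * (e * gamma / 10) = e / 2 by field; lra.
  move=> H; have := Rmult_le_compat_r _ _ _ (Rlt_le _ _ HT0) H; move=> H'; nra.
have Hdy' : e / 2 * norm dy <= e / 2 * T by apply: Rmult_le_compat_l; lra.
clear -HidM HQM HTe Hdy' Hpr Hgl.
ring_simplify in HidM; ring_simplify in HQM.
nra.
Qed.
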